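(* Let $(X,d)$ be a finite tree-like pseudometric space, and let $(\mathcal S,\alpha)$ be the unique positively weighted system of compatible splits of $X$ with $d=d_\alpha$. Then $$\operatorname{LIP}(X,d)=\sum_{\sigma\in\mathcal S}\alpha_\sigma S_\sigma$$ (Minkowski sum); in particular $\operatorname{LIP}(X,d)$ is a zonotope.
   Context: Let $X$ be a finite set, $n:=|X|$, $\{\mathbbm 1_k\}$ the standard basis of $\mathbb R^X$, $\mathbbm 1_A:=\sum_{x\in A}\mathbbm 1_x$. A split of $X$ is an unordered pair of nonempty disjoint subsets $A,B$ with $A\cup B=X$, written $A|B$. Splits $A|B$ and $C|D$ are compatible if at least one of $A\cap C,A\cap D,B\cap C,B\cap D$ is empty; a system of splits is compatible if its elements are pairwise compatible. For $\sigma=A|B$, $\delta_\sigma(i,j)=0$ if $i,j$ are in the same side, $1$ otherwise; for $\alpha\in\mathbb R_{\ge0}^{\mathcal S}$, $d_\alpha:=\sum_{\sigma\in\mathcal S}\alpha_\sigma\delta_\sigma$; the weighting is positive if all $\alpha_\sigma>0$. $S_\sigma:=\operatorname{conv}\{\tfrac{|B|}{n}\mathbbm 1_A-\tfrac{|A|}{n}\mathbbm 1_B,\ \tfrac{|A|}{n}\mathbbm 1_B-\tfrac{|B|}{n}\mathbbm 1_A\}$. For a pseudometric $d$, $\operatorname{LIP}(X,d):=\{x\in\mathbb R^X\mid\sum_i x_i=0,\ x_i-x_j\le d(i,j)\ \forall i,j\}$. An $X$-tree is a pair $(T,\phi)$ with $T$ a finite tree and $\phi:X\to V(T)$ a map whose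 image contains every vertex of degree at most $2$. A pseudometric $d$ on $X$ is tree-like if there are an $X$-tree $(T,\phi)$ and edge weights $w:E(T)\to\mathbb R_{>0}$ such that $d(x,y)$ equals the total weight of the unique path in $T$ from $\phi(x)$ to $\phi(y)$. It is known (and may be used) that a pseudometric is tree-like if and only if it equals $d_\alpha$ for a positively weighted compatible split system $(\mathcal S,\alpha)$, and that this system is unique; its splits correspond bijectively to edges of $T$ (the split of an edge $e$ separates the preimages under $\phi$ of the two components of $T-e$). *)

(* Defs.v *)
(* X is a finite type T; R^X is T -> R for a real field R. *)
From HB Require Import structures.
From mathcomp Require Import all_boot all_order all_algebra.
Set Implicit Arguments. Unset Strict Implicit. Unset Printing Implicit Defensive.
Import Order.TTheory GRing.Theory Num.Theory.
Local Open Scope ring_scope.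

(* A split A|B of X is represented as the unordered pair {A, B} : {set {set T}},
   with A, B nonempty, disjoint, covering X (so B = ~: A). *)
Definition is_split (T : finType) (s : {set {set T}}) : bool :=
  [exists A : {set T}, [&& s == [set A; ~: A], A != set0 & ~: A != set0]].

Definition compatible (T : finType) (s1 s2 : {set {set T}}) : bool :=
  [exists A in s1, exists C in s2, A :&: C == set0].

Definition compatible_system (T : finType) (S : {set {set {set T}}}) : bool :=
  [forall s1 in S, forall s2 in S, compatible s1 s2].

Definition split_system (T : finType) (S : {set {set {set T}}}) : bool :=
  [forall s in S, is_split s].

Definition split_delta (R : numDomainType) (T : finType) (s : {set {set T}})
  (i j : T) : R :=
  if [exists A in s, (i \in A) && (j \in A)] then 0 else 1.

Definition d_alpha (R : numDomainType) (T : finType) (S : {set {set {set T}}})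
  (alpha : {set {set T}} -> R) (i j : T) : R :=
  \sum_(s in S) alpha s * split_delta R s i j.

Definition is_pseudometric (R : numDomainType) (T : finType) (d : T -> T -> R) :=
  (forall i, d i i = 0) /\ (forall i j, 0 <= d i j) /\ (forall i j, d i j = d j i)
  /\ (forall i j k, d i k <= d i j + d j k).

Definition ind (R : numDomainType) (T : finType) (A : {set T}) (k : T) : R :=
  if k \in A then 1 else 0.

(* the vertex |B|/n 1_A - |A|/n 1_B of S_sigma attached to the side A (B = ~: A) *)
Definition split_vertex (R : numFieldType) (T : finType) (A : {set T}) (k : T) : R :=
  (#|~: A|%:R / #|T|%:R) * ind R A k - (#|A|%:R / #|T|%:R) * ind R (~: A) k.

Definition in_S_sigma (R : numFieldType) (T : finType) (s : {set {set T}})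
  (p : T -> R) : Prop :=
  exists lam : {set T} -> R,
    (forall A, A \in s -> 0 <= lam A) /\ \sum_(A in s) lam A = 1 /\
    (forall k, p k = \sum_(A in s) lam A * split_vertex R A k).

Definition LIP (R : numDomainType) (T : finType) (d : T -> T -> R) (x : T -> R) : Prop :=
  \sum_(i : T) x i = 0 /\ (forall i j, x i - x j <= d i j).

Definition in_minkowski_sum (R : numFieldType) (T : finType)
  (S : {set {set {set T}}}) (alpha : {set {set T}} -> R) (x : T -> R) : Prop :=
  exists p : {set {set T}} -> T -> R,
    (forall s, s \in S -> in_S_sigma s (p s)) /\
    (forall k, x k = \sum_(s in S) alpha s * p s k).

(* Main.v *)
Require Import Defs.
From HB Require Import structures.
From mathcomp Require Import all_boot all_order all_algebra ring lra.
Import Order.TTheory GRing.Theory Num.Theory.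
Local Open Scope ring_scope.

Section Aux.
Variables (R : realFieldType) (T : finType).

Definition rep (s : {set {set T}}) : {set T} := odflt set0 [pick A in s].

Lemma rep_spec s : is_split s ->
  s = [set rep s; ~: rep s] /\ rep s != set0 /\ ~: rep s != set0.
Proof.
case/existsP => C /and3P [/eqP -> hC hCc].
rewrite /rep; case: pickP => [A /=|h]; last by have := h C; rewrite !inE eqxx.
rewrite !inE => /orP [/eqP ->|/eqP ->]; first by [].
by rewrite setCK setUC.
Qed.

Lemma delta_eq (C : {set T}) i j :
  split_delta R [set C; ~:C] i j = if (i \in C) == (j \in C) then 0 else 1.
Proof.
rewrite /split_delta.
case: (boolP [exists A in [set C; ~: C], (i \in A) && (j \in A)]) => [/existsP[A' /andP[]]|/existsPn H].
  by rewrite !inE => /orP[/eqP->|/eqP->] /andP[h1 h2];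
     rewrite ?inE in h1 h2; rewrite ?h1 ?h2 ?(negbTE h1) ?(negbTE h2).
case Hi: (i \in C); case Hj: (j \in C) => //=.
  by have := H C; rewrite !inE eqxx Hi Hj.
by have := H (~: C); rewrite !inE eqxx Hi Hj orbT.
Qed.

Lemma four_point (A C : {set T}) (i j i' j' : T) :
  compatible [set A; ~:A] [set C; ~:C] ->
  i \in A -> j' \in A -> j \notin A -> i' \notin A ->
  split_delta R [set C; ~:C] i j' + split_delta R [set C; ~:C] i' j <=
  split_delta R [set C; ~:C] i j + split_delta R [set C; ~:C] i' j'.
Proof.
move=> /existsP[A' /andP[hA' /existsP[C' /andP[hC' /eqP h0]]]] hi hj' /negbTE hj /negbTE hi'.
rewrite !delta_eq.
have h z : z \in A' -> z \in C' -> False.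
  by move=> ha hc; have := in_set0 z; rewrite -h0 inE ha hc.
move: hA' hC'; rewrite !inE => /orP[/eqP ?|/eqP ?] /orP[/eqP ?|/eqP ?]; subst A' C';
 move: (h i) (h j) (h i') (h j'); rewrite ?inE ?hi ?hj ?hj' ?hi';
 case: (i \in C); case: (j \in C); case: (i' \in C); case: (j' \in C) => /= H1 H2 H3 H4;
 first [by exfalso; apply: H1 | by exfalso; apply: H2 | by exfalso; apply: H3
       | by exfalso; apply: H4 | lra].
Qed.

Lemma d_alphaD1 (S : {set {set {set T}}}) (alpha : {set {set T}} -> R) s (i j : T) : s \in S ->
  d_alpha S alpha i j = alpha s * split_delta R s i j + d_alpha (S :\ s) alpha i j.
Proof. by move=> hs; rewrite /d_alpha (big_setD1 s hs). Qed.

Lemma sumind (A : {set T}) : \sum_k ind R A k = #|A|%:R.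
Proof.
by rewrite /ind -big_mkcond /= sumr_const.
Qed.

Lemma vertexE (A : {set T}) (k : T) : #|T| != 0%N ->
  split_vertex R A k = ind R A k - #|A|%:R / #|T|%:R.
Proof.
move=> hn.
have hc : (#|~: A|%:R : R) = #|T|%:R - #|A|%:R by rewrite -(cardsC A) natrD; ring.
have hn' : (#|T|%:R : R) != 0 by rewrite pnatr_eq0.
rewrite /split_vertex hc /ind inE; case: (k \in A) => /=; by field.
Qed.

Lemma vertexC (A : {set T}) (k : T) : split_vertex R (~: A) k = - split_vertex R A k.
Proof. by rewrite /split_vertex setCK; ring. Qed.

Lemma sum_vertex (A : {set T}) : \sum_k split_vertex R A k = 0.
Proof.
case: (posnP #|T|) => [n0|npos].
  by rewrite big1 // => k _; have := card0_eq n0 k.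
have hn : #|T| != 0%N by rewrite -lt0n.
have hn' : (#|T|%:R : R) != 0 by rewrite pnatr_eq0.
rewrite (eq_bigr _ (fun k _ => vertexE A k hn)) sumrB sumind sumr_const.
by rewrite -mulr_natr; field.
Qed.

Lemma in_S_sum (s : {set {set T}}) (p : T -> R) : in_S_sigma s p -> \sum_k p k = 0.
Proof.
move=> [lam [_ [_ hp]]]; rewrite (eq_bigr _ (fun k _ => hp k)) exchange_big /=.
by rewrite big1 // => A _; rewrite -mulr_sumr sum_vertex mulr0.
Qed.

Lemma in_S_diff (s : {set {set T}}) (p : T -> R) (i j : T) :
  is_split s -> in_S_sigma s p -> p i - p j <= split_delta R s i j.
Proof.
move=> hs [lam [hl [h1 hp]]].
have hn : #|T| != 0%N by rewrite -lt0n; apply/card_gt0P; exists i.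
have [Es _] := rep_spec _ hs.
have mem2 B : B \in s -> B = rep s \/ B = ~: rep s.
  by rewrite {1}Es !inE => /orP[/eqP|/eqP]; auto.
have ->: p i - p j = \sum_(A in s) lam A * (ind R A i - ind R A j).
  by rewrite !hp -sumrB; apply: eq_bigr => A _; rewrite !vertexE //; ring.
rewrite [in split_delta _ _ _ _]Es delta_eq.
case: eqP => [e|_].
  rewrite big1 // => A hA; case: (mem2 A hA) => ->;
  by rewrite /ind ?inE e subrr mulr0.
rewrite -h1; apply: ler_sum => A hA; rewrite -[X in _ <= X]mulr1.
apply: ler_wpM2l; first exact: hl.
by rewrite /ind; case: ifP; case: ifP => _ _; lra.
Qed.


Lemma key (S : {set {set {set T}}}) (alpha : {set {set T}} -> R) :
  split_system S -> compatible_system S -> (forall s, s \in S -> 0 < alpha s) ->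
  forall x : T -> R, (forall i j, x i - x j <= d_alpha S alpha i j) ->
  exists t : {set {set T}} -> R, (forall s, s \in S -> -1 <= t s <= 1) /\
   exists c, forall k, x k = c + \sum_(s in S) alpha s * t s * ind R (rep s) k.
Proof.
have [n] := ubnP #|S|; elim: n S => // n IH S hn hsp hcp hal x hx.
have hspP := forall_inP hsp.
have hcpP : forall s1 s2, s1 \in S -> s2 \in S -> compatible s1 s2.
  by move=> s1 s2 h1 h2; exact: (forall_inP (forall_inP hcp s1 h1) s2 h2).
case: (set_0Vmem S) => [S0|[sg hsg]].
  exists (fun _ => 0); split; first by move=> s; rewrite S0 inE.
  have hc : forall i j, x i = x j.
    move=> i j; apply/le_anti.
    have := hx i j; have := hx j i.
    by rewrite /d_alpha S0 !big_set0 !subr_le0 => -> ->.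
  case: (pickP T) => [k0 _|h0].
    by exists (x k0) => k; rewrite S0 big_set0 addr0; exact: hc.
  by exists 0 => k; have := h0 k.
have [Esg _] := rep_spec _ (hspP sg hsg).
set A := rep sg in Esg *.
set a := alpha sg.
set S' := S :\ sg.
set d' := d_alpha S' alpha.
have ha : 0 < a by exact: hal.
have hxij : forall i j, x i - x j <= a * (if (i \in A) == (j \in A) then 0 else 1) + d' i j.
  by move=> i j; rewrite -delta_eq -Esg /d' /S' -d_alphaD1.
have hS'S : forall s, s \in S' -> s \in S by move=> s; rewrite inE => /andP[].
have fp : forall i j i' j', i \in A -> j' \in A -> j \notin A -> i' \notin A ->
    d' i j' + d' i' j <= d' i j + d' i' j'.
  move=> i j i' j' hi hj' hj hi'.
  rewrite /d' /d_alpha -!big_split /=; apply: ler_sum => tau htau.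
  rewrite -!mulrDr; apply: ler_wpM2l; first exact/ltW/hal/hS'S.
  have htS := hS'S _ htau.
  have [Et _] := rep_spec _ (hspP _ htS).
  have hc := hcpP _ _ hsg htS.
  rewrite Esg Et in hc; rewrite Et.
  exact: four_point hc hi hj' hj hi'.
set M := \big[Num.max/(- a)]_(p : T * T | (p.1 \in A) && (p.2 \notin A))
           (x p.1 - x p.2 - d' p.1 p.2).
have hMlo : forall i j, i \in A -> j \notin A -> x i - x j - d' i j <= M.
  move=> i j hi hj; rewrite /M (bigD1 (i, j)) /=; last by rewrite hi hj.
  by rewrite le_max lexx.
have hMa : - a <= M.
  rewrite /M; elim/big_rec: _ => // p v _ hv.
  by rewrite le_max hv orbT.
have hMhi : forall i' j', i' \notin A -> j' \in A -> M <= d' i' j' - x i' + x j'.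
  move=> i' j' hi' hj'; rewrite /M; elim/big_ind: _.
  - have := hxij i' j'; rewrite (negbTE hi') hj' /=; lra.
  - by move=> u v hu hv; rewrite ge_max hu hv.
  move=> [i j] /= /andP[hi hj].
  have h1 := hxij i j'; have h2 := hxij i' j; have h3 := fp i j i' j' hi hj' hj hi'.
  rewrite hi hj' (negbTE hi') (negbTE hj) /= in h1 h2; lra.
have hMa2 : M <= a.
  rewrite /M; elim/big_ind: _.
  - lra.
  - by move=> u v hu hv; rewrite ge_max hu hv.
  move=> [i j] /= /andP[hi hj].
  have h1 := hxij i j; rewrite hi (negbTE hj) /= in h1; lra.
set x' := fun k => x k - M * ind R A k.
have hx' : forall i j, x' i - x' j <= d_alpha S' alpha i j.
  move=> i j; rewrite /x' /ind -/d'.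
  have := hxij i j.
  case Hi: (i \in A); case Hj: (j \in A) => /= h.
  - lra.
  - have := hMlo i j Hi (negbT Hj); lra.
  - have := hMhi i j (negbT Hi) Hj; lra.
  - lra.
have hn' : (#|S'| < n)%N.
  by move: hn; rewrite (cardsD1 sg S) hsg.
have hsp' : split_system S'.
  by apply/forall_inP => s hs; apply: hspP; apply: hS'S.
have hcp' : compatible_system S'.
  by apply/forall_inP => s1 h1; apply/forall_inP => s2 h2; apply: hcpP; apply: hS'S.
have [t' [ht' [c hc]]] := IH S' hn' hsp' hcp' (fun s hs => hal s (hS'S s hs)) x' hx'.
set t0 := M / a.
have haM : a * t0 = M by rewrite /t0 mulrC divfK // gt_eqF.
exists (fun s => if s == sg then t0 else t' s); split.
  move=> s hs; case: eqP => [_|ne]; last by apply: ht'; rewrite !inE hs andbT; apply/eqP.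
  rewrite /t0 ler_pdivlMr // ler_pdivrMr //; apply/andP; split; lra.
exists c => k.
rewrite (big_setD1 sg hsg) /= eqxx -/S'.
rewrite (eq_bigr (fun s => alpha s * t' s * ind R (rep s) k)); last first.
  by move=> s; rewrite !inE => /andP[/negbTE -> _].
rewrite -/A -/a haM addrCA -hc /x'; ring.
Qed.
End Aux.
Arguments rep {T}. Arguments rep_spec {T}. Arguments vertexE {R T}. Arguments vertexC {R T}.
Arguments sumind {R T}. Arguments in_S_sum {R T}. Arguments in_S_diff {R T}.

Theorem mainTheorem4 (R : realFieldType) (T : finType) (d : T -> T -> R)
  (S : {set {set {set T}}}) (alpha : {set {set T}} -> R) :
  is_pseudometric d ->
  split_system S -> compatible_system S ->
  (forall s, s \in S -> 0 < alpha s) ->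
  (forall i j, d i j = d_alpha S alpha i j) ->
  forall x : T -> R, LIP d x <-> in_minkowski_sum S alpha x.
Proof.
move=> _ hsp hcp hal hd x; split.
  move=> [hsum hlip].
  have hx : forall i j, x i - x j <= d_alpha S alpha i j by move=> i j; rewrite -hd.
  have [t [ht [c hc]]] := @key R T S alpha hsp hcp hal x hx.
  have hspP := forall_inP hsp.
  exists (fun s k => t s * split_vertex R (rep s) k); split.
    move=> s hs.
    have [Es [hr hrc]] := rep_spec _ (hspP s hs).
    have hne : rep s != ~: rep s.
      apply/eqP => e; move/eqP: hr; apply.
      by have := setICr (rep s); rewrite -e setIid.
    have sum2 : forall F : {set T} -> R, \sum_(B in s) F B = F (rep s) + F (~: rep s).
      by move=> F; rewrite {1}Es big_setU1 ?big_set1 // inE.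
    have ht1 := ht s hs; move/andP: ht1 => [ht1 ht2].
    exists (fun B => if B == rep s then (1 + t s) / 2 else (1 - t s) / 2).
    split; first by move=> B _; case: ifP => _; lra.
    rewrite sum2 eqxx eq_sym (negbTE hne); split; first by lra.
    by move=> k /=; rewrite sum2 eqxx eq_sym (negbTE hne) vertexC; field.
  move=> k.
  have hn : #|T| != 0%N by rewrite -lt0n; apply/card_gt0P; exists k.
  have hn' : (#|T|%:R : R) != 0 by rewrite pnatr_eq0.
  have e1 : 0 = c * #|T|%:R + \sum_(s in S) alpha s * t s * #|rep s|%:R.
    rewrite -{1}hsum (eq_bigr _ (fun k _ => hc k)) big_split /= sumr_const exchange_big /=.
    rewrite mulr_natr; congr (_ + _); apply: eq_bigr => s _.
    by rewrite -mulr_sumr sumind.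
  rewrite (eq_bigr (fun s => alpha s * t s * ind R (rep s) k -
                 (alpha s * t s * #|rep s|%:R) / #|T|%:R)); last first.
    by move=> s _; rewrite vertexE //; ring.
  rewrite sumrB -mulr_suml hc.
  have -> : \sum_(i in S) alpha i * t i * #|rep i|%:R = - (c * #|T|%:R).
    by apply/eqP; rewrite -addr_eq0 addrC -e1.
  by field.
move=> [p [hp hx]]; split.
  rewrite (eq_bigr _ (fun k _ => hx k)) exchange_big /= big1 // => s hs.
  by rewrite -mulr_sumr (in_S_sum _ _ (hp s hs)) mulr0.
move=> i j; rewrite hd !hx /d_alpha -sumrB; apply: ler_sum => s hs.
rewrite -mulrBr; apply: ler_wpM2l; first exact/ltW/hal.
have hspP := forall_inP hsp.
exact: (in_S_diff s (p s) i j (hspP s hs) (hp s hs)).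
Qed.
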